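(* Let $f: \mathbb{R}^n \to \mathbb{R}^n$ be topical, $\lambda \in \mathbb{R}$ and $k$ a positive integer. If $S^\lambda(f^k) \neq \emptyset$, then $S^{\lambda/k}(f) \neq \emptyset$.
   Context: $f$ is topical if $f(x+h) = f(x)+h$ for all $h\in\mathbb{R}$ (scalar added to each coordinate) and $x\le y$ componentwise implies $f(x)\le f(y)$. For a map $g$, $S^\lambda(g) = \{x\in\mathbb{R}^n : g(x) \le \lambda + x\}$. *)

(* Defs.v *)
From mathcomp Require Import all_boot all_order all_algebra.
From mathcomp Require Import reals.
Set Implicit Arguments. Unset Strict Implicit. Unset Printing Implicit Defensive.
Import Order.TTheory GRing.Theory Num.Theory.
Local Open Scope ring_scope.

Definition vec (R : realType) (n : nat) := 'I_n -> R.

Definition vle (R : realType) (n : nat) (x y : vec R n) : Prop :=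
  forall i, x i <= y i.

Definition vshift (R : realType) (n : nat) (x : vec R n) (h : R) : vec R n :=
  fun i => x i + h.

Definition topical (R : realType) (n : nat) (f : vec R n -> vec R n) : Prop :=
  (forall (x : vec R n) (h : R), f (vshift x h) = vshift (f x) h) /\
  (forall x y : vec R n, vle x y -> vle (f x) (f y)).

Definition sub_eig (R : realType) (n : nat) (g : vec R n -> vec R n) (lam : R)
  : vec R n -> Prop := fun x => vle (g x) (vshift x lam).

(* Main.v *)
Require Import Defs.
From mathcomp Require Import all_boot all_order all_algebra.
From mathcomp Require Import reals.
From Stdlib Require Import FunctionalExtensionality.
From mathcomp Require Import lra.
Import Order.TTheory GRing.Theory Num.Theory.
Local Open Scope ring_scope.

Section Aux.
Variables (R : realType) (n : nat) (g : nat -> vec R n).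

Fixpoint Ymin (j : nat) : vec R n :=
  match j with
  | O => g O
  | S j' => fun i => Num.min (Ymin j' i) (g (S j') i)
  end.

Lemma Ymin_le j m : (m <= j)%N -> vle (Ymin j) (g m).
Proof.
elim: j m => [|j IH] m /=.
  by rewrite leqn0 => /eqP -> i.
rewrite leq_eqVlt => /orP [/eqP ->|Hm] i.
  by rewrite ge_min lexx orbT.
by rewrite ge_min (IH m Hm i).
Qed.

Lemma Ymin_ge j (z : vec R n) : (forall m, (m <= j)%N -> vle z (g m)) ->
  vle z (Ymin j).
Proof.
elim: j => [|j IH] H i /=.
  exact: H.
rewrite le_min (IH (fun m Hm => H m (leqW Hm)) i) /=.
exact: H.
Qed.
End Aux.
Arguments Ymin {R n} g j.
Arguments Ymin_le {R n} g j m.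
Arguments Ymin_ge {R n} g j z.

Theorem lemma2p2 (R : realType) (n : nat) (f : vec R n -> vec R n)
  (lam : R) (k : nat) :
  topical f -> (0 < k)%N ->
  (exists x, sub_eig (iter k f) lam x) ->
  exists y, sub_eig f (lam / k%:R) y.
Proof.
move=> [Hsh Hmon] Hk [x Hx].
set mu := lam / k%:R.
have Hkmu : k%:R * mu = lam.
  rewrite /mu mulrC -mulrA mulVf ?mulr1 //.
  by rewrite pnatr_eq0 -lt0n.
pose g := fun j : nat => vshift (iter j f x) (- (j%:R * mu)).
have Hfg : forall j, f (g j) = vshift (g j.+1) mu.
  move=> j; rewrite /g Hsh iterS.
  apply: functional_extensionality => i; rewrite /vshift -addrA; congr (_ + _).
  by rewrite -natr1 mulrDl mul1r opprD -addrA addNr addr0.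
exists (Ymin g k.-1) => i.
have Hz := @Ymin_ge _ _ g k.-1 (vshift (f (Ymin g k.-1)) (- mu)).
have : vle (vshift (f (Ymin g k.-1)) (- mu)) (Ymin g k.-1).
  apply: Hz => m Hm j.
  case: m Hm => [|m] Hm.
    have H1 := Hmon _ _ (@Ymin_le _ _ g _ _ (leqnn k.-1)) j.
    rewrite Hfg prednK // /vshift /g Hkmu /vshift in H1.
    have H2 := Hx j; rewrite /vshift in H2.
    rewrite /vshift /g /=.
    rewrite /vshift mul0r oppr0 addr0 in H1 *. lra.
  have H1 := Hmon _ _ (@Ymin_le _ _ g _ m (leq_trans (leqnSn m) Hm)) j.
  rewrite Hfg /vshift /g /vshift in H1.
  rewrite /g /vshift. lra.
move=> /(_ i); rewrite /vshift => H.
lra.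
Qed.
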